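(* Let $A_p\in C[0,\infty)$ be real-valued and consider the Maxwell--Bloch system on $\mathbb X=\mathbb R^2\times S^3$, \[ \dot A=B,\quad \dot B=-\Omega^2A-\sigma B+cj,\quad i\hbar\dot C_1=\hbar\omega_1C_1+iaC_2,\quad i\hbar\dot C_2=\hbar\omega_2C_2-iaC_1, \] with $j=2q\,\mathrm{Im}[\overline{C_1}C_2]$, $a(t)=\frac qc[A(t)+A_p(t)]$, and its reduced dynamics $\dot Y=F(Y,t)$ on $\mathbb Y=\mathbb R^2\times S^2$. Let $T>0$, let $Y(t)=(A(t),B(t),C_*(t))$ be a $T$-periodic solution of the reduced dynamics, and let $\hat Y(t)=(\hat A(t),\hat B(t),\hat C(t))$ be the solution of the Maxwell--Bloch system with any initial state $\hat Y(0)\in\Pi^{-1}(Y(0))$. Then $(\hat A(t),\hat B(t))$, the current $j(t)=2q\,\mathrm{Im}[\overline{\hat C_1(t)}\hat C_2(t)]$ and the population inversion $I(t)=|\hat C_2(t)|^2-|\hat C_1(t)|^2$ are $T$-periodic, while for every $t\ge0$ there is $\theta(t)\in[0,2\pi]$ with $\hat C(t+T)=e^{i\theta(t)}\hat C(t)$.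
   Context: Parameters: $\Omega,\sigma,c,\hbar,p>0$, real $\omega_2>\omega_1$, $\omega=\omega_2-\omega_1$, $q=\omega p$. $S^3=\{C=(C_1,C_2)\in\mathbb C^2:|C_1|^2+|C_2|^2=1\}$. $U(1)$ acts on $\mathbb X$ by $(A,B,C)\mapsto(A,B,e^{i\theta}C)$, commuting with the flow. $\Pi(A,B,C)=(A,B,h(C))$ with $h:S^3\to S^2$ the Hopf fibration identifies $\mathbb X/U(1)$ with $\mathbb Y=\mathbb R^2\times S^2$; the reduced dynamics $\dot Y=F(Y,t)$ is the induced vector field on $\mathbb Y$, so that $\Pi$ maps Maxwell--Bloch solutions to reduced solutions. *)

(* Defs.v *)
From Stdlib Require Import Reals.
From Coquelicot Require Import Coquelicot.
Open Scope R_scope.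

(* A curve defined on [0, oo) solves an ODE there: it is differentiable with the
   prescribed derivative at every t > 0 and is right-continuous at 0
   (equivalent, for continuous right-hand sides, to a C^1 solution on [0,oo)). *)
Definition right_cont0 {V : UniformSpace} (f : R -> V) : Prop :=
  filterlim f (at_right 0) (locally (f 0)).

Definition expi (theta : R) : C := (cos theta, sin theta).

Definition omega (w1 w2 : R) : R := w2 - w1.
Definition qq (p w1 w2 : R) : R := omega w1 w2 * p.

Definition acoef (c p w1 w2 : R) (A Ap : R -> R) (t : R) : R :=
  qq p w1 w2 / c * (A t + Ap t).

Definition current (p w1 w2 : R) (C1 C2 : C) : R :=
  2 * qq p w1 w2 * Im (Cconj C1 * C2)%C.

Definition inversion (C1 C2 : C) : R := Cmod C2 ^ 2 - Cmod C1 ^ 2.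

Definition on_S3 (C1 C2 : C) : Prop := Cmod C1 ^ 2 + Cmod C2 ^ 2 = 1.
Definition on_S2 (u v w : R) : Prop := u ^ 2 + v ^ 2 + w ^ 2 = 1.

(* Hopf fibration h : S^3 -> S^2 (convention: h(C) = (2 Re(conj C1 C2),
   2 Im(conj C1 C2), |C2|^2 - |C1|^2)); Pi(A,B,C) = (A,B,h(C)). *)
Definition hopf (C1 C2 : C) : R * R * R :=
  (2 * Re (Cconj C1 * C2)%C, 2 * Im (Cconj C1 * C2)%C, inversion C1 C2).

Definition MB_solution (Omega sigma c hbar p w1 w2 : R) (Ap : R -> R)
    (A B : R -> R) (C1 C2 : R -> C) : Prop :=
  (forall t, 0 <= t -> on_S3 (C1 t) (C2 t)) /\
  right_cont0 A /\ right_cont0 B /\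
  right_cont0 (V := C_R_NormedModule) C1 /\ right_cont0 (V := C_R_NormedModule) C2 /\
  forall t, 0 < t ->
    exists dC1 dC2 : C,
      is_derive A t (B t) /\
      is_derive B t (- Omega ^ 2 * A t - sigma * B t
                     + c * current p w1 w2 (C1 t) (C2 t)) /\
      is_derive (K := R_AbsRing) (V := C_R_NormedModule) C1 t dC1 /\
      is_derive (K := R_AbsRing) (V := C_R_NormedModule) C2 t dC2 /\
      (Ci * RtoC hbar * dC1
        = RtoC (hbar * w1) * C1 t + Ci * RtoC (acoef c p w1 w2 A Ap t) * C2 t)%C /\
      (Ci * RtoC hbar * dC2
        = RtoC (hbar * w2) * C2 t - Ci * RtoC (acoef c p w1 w2 A Ap t) * C1 t)%C.

(* The reduced dynamics dY/dt = F(Y,t) on Y = R^2 x S^2: the vector field induced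
   by the Maxwell--Bloch field through Pi (computed with the Hopf convention above):
     A' = B,  B' = -Omega^2 A - sigma B + c q v,
     u' = omega v + 2 (a/hbar) w,  v' = - omega u,  w' = - 2 (a/hbar) u.
   Note c q v is c times the current j, since j = q v under Pi. *)
Definition reduced_solution (Omega sigma c hbar p w1 w2 : R) (Ap : R -> R)
    (A B u v w : R -> R) : Prop :=
  (forall t, 0 <= t -> on_S2 (u t) (v t) (w t)) /\
  right_cont0 A /\ right_cont0 B /\ right_cont0 u /\ right_cont0 v /\
  right_cont0 w /\
  forall t, 0 < t ->
    let a := acoef c p w1 w2 A Ap t in
    is_derive A t (B t) /\
    is_derive B t (- Omega ^ 2 * A t - sigma * B t + c * qq p w1 w2 * v t) /\
    is_derive u t (omega w1 w2 * v t + 2 * (a / hbar) * w t) /\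
    is_derive v t (- omega w1 w2 * u t) /\
    is_derive w t (- 2 * (a / hbar) * u t).

(* Main.v *)
Require Import Defs.
From Stdlib Require Import Reals Lra Psatz FunctionalExtensionality.
From Coquelicot Require Import Coquelicot.
Open Scope R_scope.

Lemma rc_plus (f g : R -> R) : right_cont0 f -> right_cont0 g ->
  right_cont0 (fun t => f t + g t).
Proof.
  unfold right_cont0; intros Hf Hg.
  apply (filterlim_comp_2 (F := at_right 0) f g Rplus Hf Hg).
  apply (filterlim_plus (K := R_AbsRing) (V := R_NormedModule) (f 0) (g 0)).
Qed.

Lemma rc_mult (f g : R -> R) : right_cont0 f -> right_cont0 g ->
  right_cont0 (fun t => f t * g t).
Proof.
  unfold right_cont0; intros Hf Hg.
  apply (filterlim_comp_2 (F := at_right 0) f g Rmult Hf Hg).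
  apply (filterlim_mult (K := R_AbsRing) (f 0) (g 0)).
Qed.

Lemma rc_const (a : R) : right_cont0 (fun _ => a).
Proof. unfold right_cont0. apply filterlim_const. Qed.

Lemma rc_fst (f : R -> C) : right_cont0 (V := C_R_NormedModule) f ->
  right_cont0 (fun t => fst (f t)).
Proof.
  unfold right_cont0; intros Hf.
  eapply filterlim_comp. apply Hf.
  destruct (f 0) as [x y]. apply (continuous_fst (U:=R_UniformSpace) (V:=R_UniformSpace) x y).
Qed.

Lemma rc_snd (f : R -> C) : right_cont0 (V := C_R_NormedModule) f ->
  right_cont0 (fun t => snd (f t)).
Proof.
  unfold right_cont0; intros Hf.
  eapply filterlim_comp. apply Hf.
  destruct (f 0) as [x y]. apply (continuous_snd (U:=R_UniformSpace) (V:=R_UniformSpace) x y).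
Qed.

Lemma der_fst (f : R -> C) t l : is_derive (K := R_AbsRing) (V := C_R_NormedModule) f t l ->
  is_derive (fun s => fst (f s)) t (fst l).
Proof.
  unfold is_derive; intros H.
  pose proof (filterdiff_comp' (K:=R_AbsRing) (U:=R_NormedModule) (V:=C_R_NormedModule) (W:=R_NormedModule) f fst t _ _ H
     (filterdiff_linear _ (is_linear_fst (U:=R_NormedModule) (V:=R_NormedModule)))) as H2.
  exact H2.
Qed.

Lemma der_snd (f : R -> C) t l : is_derive (K := R_AbsRing) (V := C_R_NormedModule) f t l ->
  is_derive (fun s => snd (f s)) t (snd l).
Proof.
  unfold is_derive; intros H.
  pose proof (filterdiff_comp' (K:=R_AbsRing) (U:=R_NormedModule) (V:=C_R_NormedModule) (W:=R_NormedModule) f snd t _ _ H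
     (filterdiff_linear _ (is_linear_snd (U:=R_NormedModule) (V:=R_NormedModule)))) as H2.
  exact H2.
Qed.

Lemma der_eq (f : R -> R) (t l l' : R) : is_derive f t l -> l = l' -> is_derive f t l'.
Proof. intros H ->; exact H. Qed.
Lemma dplus (f g : R -> R) (t df dg : R) : is_derive f t df -> is_derive g t dg -> is_derive (fun s => f s + g s) t (df+dg).
Proof. intros; apply (is_derive_plus (K:=R_AbsRing) (V:=R_NormedModule)); auto. Qed.
Lemma dminus (f g : R -> R) (t df dg : R) : is_derive f t df -> is_derive g t dg -> is_derive (fun s => f s - g s) t (df-dg).
Proof. intros; apply (is_derive_minus (K:=R_AbsRing) (V:=R_NormedModule)); auto. Qed.
Lemma dmult (f g : R -> R) (t df dg : R) : is_derive f t df -> is_derive g t dg -> is_derive (fun s => f s * g s) t (df * g t + f t * dg).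
Proof. intros; apply (is_derive_mult (K:=R_AbsRing)); auto. intros; apply Rmult_comm. Qed.
Lemma dsq (f g : R -> R) (t df dg : R) : is_derive f t df -> is_derive g t dg ->
  is_derive (fun s => (f s - g s)^2) t (2*(f t - g t)*(df-dg)).
Proof.
  intros Hf Hg. apply (is_derive_ext (fun s => (f s - g s)*(f s - g s))).
  intros s. simpl. ring.
  eapply der_eq. apply dmult; apply dminus; eauto. simpl. ring.
Qed.

Lemma der_cont (f : R -> R) (t l : R) : is_derive f t l -> continuity_pt f t.
Proof. intros H. apply derivable_continuous_pt. exists l. now apply is_derive_Reals. Qed.

Lemma rc_small (E : R -> R) : right_cont0 E -> E 0 = 0 -> forall e, 0 < e ->
  exists d, 0 < d /\ forall y, 0 < y < d -> Rabs (E y) < e.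
Proof.
  intros HE H0 e He. unfold right_cont0 in HE.
  apply filterlim_locally with (eps := mkposreal e He) in HE.
  destruct HE as [d Hd]. exists d; split. apply cond_pos.
  intros y [Hy1 Hy2]. specialize (Hd y). 
  assert (B: ball 0 d y). { unfold ball; simpl; unfold AbsRing_ball, abs, minus, plus, opp; simpl.
    rewrite Rabs_right; lra. }
  specialize (Hd B Hy1). revert Hd. rewrite H0. unfold ball; simpl; unfold AbsRing_ball, abs, minus, plus, opp; simpl.
  replace (E y + - 0) with (E y) by ring. auto.
Qed.

Lemma gronwall0 (E dE : R -> R) K : 0 <= K -> (forall t, 0<=t -> 0 <= E t) -> E 0 = 0 ->
  right_cont0 E -> (forall t, 0<t -> is_derive E t (dE t)) ->
  (forall t, 0<t -> dE t <= K * E t) -> forall t, 0 <= t -> E t = 0.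
Proof.
  intros HK Hpos H0 Hrc HD Hle t Ht.
  destruct (Rle_lt_or_eq_dec 0 t Ht) as [Ht'|<-]; [|exact H0].
  destruct (Rle_lt_or_eq_dec 0 (E t) (Hpos t Ht)) as [Hp|<-]; [|reflexivity].
  exfalso.
  set (F := fun s => E s * exp (- K * s)).
  set (dF := fun s => dE s * exp (- K * s) + E s * (- K * exp (- K * s))).
  assert (HF : forall s, 0 < s -> is_derive F s (dF s)).
  { intros s Hs. unfold F, dF. eapply der_eq. apply dmult. auto.
    assert (He : is_derive (fun s => exp (-K*s)) s (-K*exp(-K*s))) by (auto_derive; auto; ring).
    exact He. reflexivity. }
  assert (HFt : 0 < F t) by (unfold F; apply Rmult_lt_0_compat; auto; apply exp_pos).
  destruct (rc_small E Hrc H0 (F t) HFt) as [d [Hd Hd2]].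
  set (e := Rmin (d/2) (t/2)).
  assert (He1 : 0 < e) by (unfold e; apply Rmin_glb_lt; lra).
  assert (He2 : e < d) by (unfold e; pose proof (Rmin_l (d/2) (t/2)); lra).
  assert (He3 : e < t) by (unfold e; pose proof (Rmin_r (d/2) (t/2)); lra).
  assert (HFe : F e < F t).
  { specialize (Hd2 e (conj He1 He2)). unfold F.
    assert (exp (-K*e) <= 1). { rewrite <- exp_0. assert (-K*e <= 0) by nra. destruct (Rle_lt_or_eq_dec _ _ H) as [h|h].
      left; apply exp_increasing; lra. rewrite h. lra. }
    pose proof (Hpos e (Rlt_le _ _ He1)). rewrite Rabs_right in Hd2 by lra.
    fold (F t). nra. }
  destruct (MVT_gen F e t dF) as [c [Hc Hc2]].
  - intros x Hx. rewrite Rmin_left in Hx by lra. rewrite Rmax_right in Hx by lra. apply HF; lra.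
  - intros x Hx. rewrite Rmin_left in Hx by lra. rewrite Rmax_right in Hx by lra. apply der_cont with (dF x). apply HF; lra.
  - rewrite Rmin_left in Hc by lra. rewrite Rmax_right in Hc by lra.
    assert (dF c <= 0). { unfold dF. specialize (Hle c ltac:(lra)). pose proof (exp_pos (-K*c)). nra. }
    nra.
Qed.

Lemma ineq (dA dB du dv dw u w O2 s cq k : R) : 0 <= s -> u^2 + w^2 <= 1 ->
  2*dA*dB*(1-O2) - 2*s*dB^2 + 2*cq*dB*dv + 4*k*dA*(du*w - dw*u)
  <= (3 + (1-O2)^2 + cq^2 + 4*k^2) * (dA^2 + dB^2 + du^2 + dv^2 + dw^2).
Proof.
  intros Hs Hu.
  assert (H1 : 2*dA*dB*(1-O2) <= dA^2 + (1-O2)^2*dB^2) by (pose proof (pow2_ge_0 (dA - (1-O2)*dB)); nra).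
  assert (H2 : 2*cq*dB*dv <= dB^2 + cq^2*dv^2) by (pose proof (pow2_ge_0 (dB - cq*dv)); nra).
  assert (H3 : 4*k*dA*(du*w - dw*u) <= dA^2 + 4*k^2*(du*w-dw*u)^2) by (pose proof (pow2_ge_0 (dA - 2*k*(du*w-dw*u))); nra).
  assert (H4 : (du*w-dw*u)^2 <= du^2 + dw^2).
  { assert ((du*w-dw*u)^2 + (du*u+dw*w)^2 = (du^2+dw^2)*(u^2+w^2)) by ring.
    pose proof (pow2_ge_0 (du*u+dw*w)). pose proof (pow2_ge_0 du). pose proof (pow2_ge_0 dw).
    assert ((du^2+dw^2)*(u^2+w^2) <= (du^2+dw^2)*1) by (apply Rmult_le_compat_l; lra). lra. }
  assert (0 <= s*dB^2) by (apply Rmult_le_pos; auto; apply pow2_ge_0).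
  pose proof (pow2_ge_0 dA). pose proof (pow2_ge_0 dB). pose proof (pow2_ge_0 du).
  pose proof (pow2_ge_0 dv). pose proof (pow2_ge_0 dw).
  pose proof (pow2_ge_0 (1-O2)). pose proof (pow2_ge_0 cq). pose proof (pow2_ge_0 k).
  assert (4*k^2*(du*w-dw*u)^2 <= 4*k^2*(du^2+dw^2)) by (apply Rmult_le_compat_l; nra).
  assert ((1-O2)^2*dB^2 <= (3 + (1-O2)^2 + cq^2 + 4*k^2)*dB^2) by (apply Rmult_le_compat_r; nra).
  assert (cq^2*dv^2 <= (3 + (1-O2)^2 + cq^2 + 4*k^2)*dv^2) by (apply Rmult_le_compat_r; nra).
  assert (4*k^2*du^2 <= (3 + (1-O2)^2 + cq^2 + 4*k^2)*du^2) by (apply Rmult_le_compat_r; nra).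
  assert (4*k^2*dw^2 <= (3 + (1-O2)^2 + cq^2 + 4*k^2)*dw^2) by (apply Rmult_le_compat_r; nra).
  assert (2*dA^2 <= (3 + (1-O2)^2 + cq^2 + 4*k^2)*dA^2) by (apply Rmult_le_compat_r; nra).
  assert (dB^2 <= (3 + (1-O2)^2 + cq^2 + 4*k^2)*dB^2 - (1-O2)^2*dB^2) by nra.
  nra.
Qed.

Lemma rc_sqd (f g : R -> R) : right_cont0 f -> right_cont0 g -> right_cont0 (fun t => (f t - g t)^2).
Proof.
  intros Hf Hg.
  assert (Hm : right_cont0 (fun t => f t + (-1) * g t)) by (apply rc_plus; auto; apply rc_mult; auto; apply rc_const).
  assert (Hm2 := rc_mult _ _ Hm (rc_mult _ _ Hm (rc_const 1))).
  replace (fun t => (f t - g t)^2) with (fun t => (f t + (-1) * g t) * ((f t + (-1) * g t) * 1)).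
  exact Hm2. apply functional_extensionality; intros; ring.
Qed.

Lemma uniq (O2 s om cq k : R) (Hs : 0 <= s)
  (A B u v w Ah Bh uh vh wh al alh : R -> R)
  (Hal : forall t, al t - alh t = k * (A t - Ah t))
  (Hs2 : forall t, 0 <= t -> u t ^ 2 + w t ^ 2 <= 1)
  (rA : right_cont0 A) (rB : right_cont0 B) (ru : right_cont0 u) (rv : right_cont0 v) (rw : right_cont0 w)
  (rAh : right_cont0 Ah) (rBh : right_cont0 Bh) (ruh : right_cont0 uh) (rvh : right_cont0 vh) (rwh : right_cont0 wh)
  (D : forall t, 0 < t -> is_derive A t (B t) /\ is_derive B t (- O2 * A t - s * B t + cq * v t) /\
      is_derive u t (om * v t + 2 * al t * w t) /\ is_derive v t (- om * u t) /\
      is_derive w t (- 2 * al t * u t))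
  (Dh : forall t, 0 < t -> is_derive Ah t (Bh t) /\ is_derive Bh t (- O2 * Ah t - s * Bh t + cq * vh t) /\
      is_derive uh t (om * vh t + 2 * alh t * wh t) /\ is_derive vh t (- om * uh t) /\
      is_derive wh t (- 2 * alh t * uh t))
  (H0 : A 0 = Ah 0 /\ B 0 = Bh 0 /\ u 0 = uh 0 /\ v 0 = vh 0 /\ w 0 = wh 0) :
  forall t, 0 <= t -> A t = Ah t /\ B t = Bh t /\ u t = uh t /\ v t = vh t /\ w t = wh t.
Proof.
  set (E := fun t => (A t - Ah t)^2 + (B t - Bh t)^2 + (u t - uh t)^2 + (v t - vh t)^2 + (w t - wh t)^2).
  set (dE := fun t => 2*(A t - Ah t)*(B t - Bh t)
     + 2*(B t - Bh t)*((- O2 * A t - s * B t + cq * v t) - (- O2 * Ah t - s * Bh t + cq * vh t))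
     + 2*(u t - uh t)*((om * v t + 2 * al t * w t) - (om * vh t + 2 * alh t * wh t))
     + 2*(v t - vh t)*((- om * u t) - (- om * uh t))
     + 2*(w t - wh t)*((- 2 * al t * u t) - (- 2 * alh t * uh t))).
  set (K := 3 + (1-O2)^2 + cq^2 + 4*k^2).
  assert (HE : forall t, 0 <= t -> E t = 0).
  { apply (gronwall0 E dE K).
    - unfold K. pose proof (pow2_ge_0 (1-O2)). pose proof (pow2_ge_0 cq). pose proof (pow2_ge_0 k). lra.
    - intros t _. unfold E.
      pose proof (pow2_ge_0 (A t - Ah t)). pose proof (pow2_ge_0 (B t - Bh t)).
      pose proof (pow2_ge_0 (u t - uh t)). pose proof (pow2_ge_0 (v t - vh t)).
      pose proof (pow2_ge_0 (w t - wh t)). lra.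
    - unfold E. destruct H0 as [e1 [e2 [e3 [e4 e5]]]]. rewrite e1, e2, e3, e4, e5. ring.
    - unfold E. 
      repeat apply rc_plus; apply rc_sqd; assumption.
    - intros t Ht. destruct (D t Ht) as [d1 [d2 [d3 [d4 d5]]]].
      destruct (Dh t Ht) as [h1 [h2 [h3 [h4 h5]]]].
      unfold E, dE.
      repeat apply dplus; apply dsq; assumption.
    - intros t Ht. unfold dE, E, K.
      assert (Ha : al t = alh t + k * (A t - Ah t)) by (rewrite <- Hal; ring).
      rewrite Ha.
      eapply Rle_trans; [|apply (ineq (A t - Ah t) (B t - Bh t) (u t - uh t) (v t - vh t) (w t - wh t) (u t) (w t) O2 s cq k Hs (Hs2 t ltac:(lra)))].
      right. ring. }
  intros t Ht. specialize (HE t Ht). unfold E in HE.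
  pose proof (pow2_ge_0 (A t - Ah t)). pose proof (pow2_ge_0 (B t - Bh t)).
  pose proof (pow2_ge_0 (u t - uh t)). pose proof (pow2_ge_0 (v t - vh t)).
  pose proof (pow2_ge_0 (w t - wh t)).
  assert (forall x, x ^ 2 = 0 -> x = 0) by (intros x Hx; nra).
  repeat split; apply Rminus_diag_uniq; apply H5; lra.
Qed.

Lemma angle (zx zy : R) : zx^2 + zy^2 = 1 ->
  exists th, 0 <= th <= 2*PI /\ cos th = zx /\ sin th = zy.
Proof.
  intros H.
  assert (Hb : -1 <= zx <= 1) by (pose proof (pow2_ge_0 zy); nra).
  assert (Hs : sin (acos zx) = Rabs zy).
  { rewrite sin_acos by auto. rewrite <- sqrt_Rsqr_abs. f_equal. unfold Rsqr. nra. }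
  pose proof (acos_bound zx). pose proof PI_RGT_0.
  destruct (Rle_or_lt 0 zy) as [Hy|Hy].
  - exists (acos zx). split; [lra|]. split. apply cos_acos; auto. rewrite Hs, Rabs_right; lra.
  - exists (2*PI - acos zx). split; [lra|]. rewrite cos_minus, sin_minus, cos_2PI, sin_2PI.
    rewrite cos_acos by auto. rewrite Hs, Rabs_left by lra. split; ring.
Qed.

Lemma Cmod_sq (z : C) : Cmod z ^ 2 = fst z ^ 2 + snd z ^ 2.
Proof. unfold Cmod. rewrite pow2_sqrt; auto. pose proof (pow2_ge_0 (fst z)); pose proof (pow2_ge_0 (snd z)); lra. Qed.

Lemma fiber (C1 C2 D1 D2 : C) : on_S3 C1 C2 -> on_S3 D1 D2 -> hopf D1 D2 = hopf C1 C2 ->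
  exists th, 0 <= th <= 2*PI /\ D1 = (expi th * C1)%C /\ D2 = (expi th * C2)%C.
Proof.
  unfold on_S3, hopf, inversion. rewrite !Cmod_sq.
  destruct C1 as [a b], C2 as [c d], D1 as [a' b'], D2 as [c' d']. simpl.
  intros HC HD Hh. injection Hh; intros Hw Hv Hu.
  assert (EP : a*c + b*d = a'*c' + b'*d') by lra.
  assert (EQ : a*d - b*c = a'*d' - b'*c') by lra.
  assert (Er1 : a^2+b^2 = a'^2+b'^2) by lra.
  assert (Er2 : c^2+d^2 = c'^2+d'^2) by lra.
  unfold expi, Cmult; simpl.
  destruct (Req_dec (a^2+b^2) 0) as [Z|NZ].
  - assert (a = 0) by nra. assert (b = 0) by nra. assert (a' = 0) by nra. assert (b' = 0) by nra.
    subst.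
    assert (Hr : c^2+d^2 = 1) by lra.
    destruct (angle (c'*c + d'*d) (d'*c - c'*d)) as [th [Hth [Hc Hs]]].
    { assert ((c'*c + d'*d)^2 + (d'*c - c'*d)^2 = (c'^2+d'^2)*(c^2+d^2)) by ring. nra. }
    exists th. split; auto. rewrite Hc, Hs. split; f_equal; try ring.
    + transitivity (c' * (c^2+d^2)). rewrite Hr; ring. ring.
    + transitivity (d' * (c^2+d^2)). rewrite Hr; ring. ring.
  - destruct (angle ((a'*a + b'*b)/(a^2+b^2)) ((b'*a - a'*b)/(a^2+b^2))) as [th [Hth [Hc Hs]]].
    { assert (Hx : (a'*a + b'*b)^2 + (b'*a - a'*b)^2 = (a^2+b^2)*(a^2+b^2)) by (rewrite Er1 at 2; ring).
      unfold Rdiv. rewrite !Rpow_mult_distr. rewrite <- Rmult_plus_distr_r. rewrite Hx.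
      field. auto. }
    exists th. split; auto. rewrite Hc, Hs. split; f_equal.
    + field; auto.
    + field; auto.
    + replace ((a' * a + b' * b) / (a ^ 2 + b ^ 2) * c - (b' * a - a' * b) / (a ^ 2 + b ^ 2) * d)
        with ((a'*(a*c+b*d) - b'*(a*d-b*c))/(a^2+b^2)) by (field; auto).
      rewrite EP, EQ, Er1. field. rewrite <- Er1; auto.
    + replace ((a' * a + b' * b) / (a ^ 2 + b ^ 2) * d + (b' * a - a' * b) / (a ^ 2 + b ^ 2) * c)
        with ((a'*(a*d-b*c) + b'*(a*c+b*d))/(a^2+b^2)) by (field; auto).
      rewrite EP, EQ, Er1. field. rewrite <- Er1; auto.
Qed.

Lemma rc_minus (f g : R -> R) : right_cont0 f -> right_cont0 g -> right_cont0 (fun t => f t - g t).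
Proof.
  intros Hf Hg.
  assert (Hm : right_cont0 (fun t => f t + (-1) * g t)) by (apply rc_plus; auto; apply rc_mult; auto; apply rc_const).
  replace (fun t => f t - g t) with (fun t => f t + (-1) * g t). exact Hm.
  apply functional_extensionality; intros; ring.
Qed.

Lemma comp_eqs (hbar w1 aa x1 y1 x2 y2 p1 q1 : R) : hbar <> 0 ->
  (Ci * RtoC hbar * (p1, q1) = RtoC (hbar * w1) * (x1, y1) + Ci * RtoC aa * (x2, y2))%C ->
  p1 = w1 * y1 + aa / hbar * x2 /\ q1 = - w1 * x1 + aa / hbar * y2.
Proof.
  intros Hh E.
  assert (E1 := f_equal fst E). assert (E2 := f_equal snd E).
  unfold Ci, RtoC, Cmult, Cplus in E1, E2. simpl in E1, E2.
  ring_simplify in E1. ring_simplify in E2.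
  split.
  - apply (Rmult_eq_reg_l hbar); auto. rewrite E2. field; auto.
  - apply (Rmult_eq_reg_l hbar); auto. replace (hbar*q1) with (- (-hbar*q1)) by ring. rewrite E1. field; auto.
Qed.

Lemma comp_eqs2 (hbar w2 aa x1 y1 x2 y2 p2 q2 : R) : hbar <> 0 ->
  (Ci * RtoC hbar * (p2, q2) = RtoC (hbar * w2) * (x2, y2) - Ci * RtoC aa * (x1, y1))%C ->
  p2 = w2 * y2 - aa / hbar * x1 /\ q2 = - w2 * x2 - aa / hbar * y1.
Proof.
  intros Hh E.
  assert (E1 := f_equal fst E). assert (E2 := f_equal snd E).
  unfold Ci, RtoC, Cmult, Cplus, Cminus, Copp in E1, E2. simpl in E1, E2.
  ring_simplify in E1. ring_simplify in E2.
  split.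
  - apply (Rmult_eq_reg_l hbar); auto. rewrite E2. field; auto.
  - apply (Rmult_eq_reg_l hbar); auto. replace (hbar*q2) with (- (-hbar*q2)) by ring. rewrite E1. field; auto.
Qed.

Theorem lemma3p2 (Omega sigma c hbar p w1 w2 : R)
  (HOmega : 0 < Omega) (Hsigma : 0 < sigma) (Hc : 0 < c) (Hhbar : 0 < hbar)
  (Hp : 0 < p) (Hw : w1 < w2)
  (Ap : R -> R) (HAp0 : right_cont0 Ap) (HAp : forall t, 0 < t -> continuity_pt Ap t)
  (T : R) (HT : 0 < T)
  (A B u v w : R -> R)
  (HY : reduced_solution Omega sigma c hbar p w1 w2 Ap A B u v w)
  (Hper : forall t, 0 <= t ->
     A (t + T) = A t /\ B (t + T) = B t /\ u (t + T) = u t /\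
     v (t + T) = v t /\ w (t + T) = w t)
  (Ah Bh : R -> R) (C1h C2h : R -> C)
  (HYh : MB_solution Omega sigma c hbar p w1 w2 Ap Ah Bh C1h C2h)
  (H0 : Ah 0 = A 0 /\ Bh 0 = B 0 /\ hopf (C1h 0) (C2h 0) = (u 0, v 0, w 0)) :
  (forall t, 0 <= t ->
     Ah (t + T) = Ah t /\ Bh (t + T) = Bh t /\
     current p w1 w2 (C1h (t + T)) (C2h (t + T)) = current p w1 w2 (C1h t) (C2h t) /\
     inversion (C1h (t + T)) (C2h (t + T)) = inversion (C1h t) (C2h t)) /\
  (forall t, 0 <= t -> exists theta, 0 <= theta <= 2 * PI /\
     C1h (t + T) = (expi theta * C1h t)%C /\ C2h (t + T) = (expi theta * C2h t)%C).
Proof.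
  destruct HY as [HS2 [rA [rB [ru [rv [rw DY]]]]]].
  destruct HYh as [HS3 [rAh [rBh [rC1 [rC2 DYh]]]]].
  assert (Hh0 : hbar <> 0) by lra.
  set (x1 := fun t => fst (C1h t)). set (y1 := fun t => snd (C1h t)).
  set (x2 := fun t => fst (C2h t)). set (y2 := fun t => snd (C2h t)).
  set (uh := fun t => 2 * (x1 t * x2 t + y1 t * y2 t)).
  set (vh := fun t => 2 * (x1 t * y2 t - y1 t * x2 t)).
  set (wh := fun t => (x2 t * x2 t + y2 t * y2 t) - (x1 t * x1 t + y1 t * y1 t)).
  assert (Hhopf : forall s, hopf (C1h s) (C2h s) = (uh s, vh s, wh s)).
  { intros s. unfold hopf, inversion. rewrite !Cmod_sq. unfold uh, vh, wh, x1, y1, x2, y2.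
    destruct (C1h s) as [a b], (C2h s) as [a' b']. simpl. f_equal; [f_equal|]; ring. }
  assert (Hcur : forall s, current p w1 w2 (C1h s) (C2h s) = qq p w1 w2 * vh s).
  { intros s. unfold current, vh, x1, y1, x2, y2.
    destruct (C1h s) as [a b], (C2h s) as [a' b']. simpl. ring. }
  assert (Hinv : forall s, inversion (C1h s) (C2h s) = wh s).
  { intros s. generalize (Hhopf s). unfold hopf. intros Hq. injection Hq. auto. }
  assert (rx1 : right_cont0 x1) by (apply rc_fst; auto).
  assert (ry1 : right_cont0 y1) by (apply rc_snd; auto).
  assert (rx2 : right_cont0 x2) by (apply rc_fst; auto).
  assert (ry2 : right_cont0 y2) by (apply rc_snd; auto).
  assert (U := uniq (Omega ^ 2) sigma (omega w1 w2) (c * qq p w1 w2) (qq p w1 w2 / c / hbar)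
    ltac:(lra) A B u v w Ah Bh uh vh wh
    (fun t => acoef c p w1 w2 A Ap t / hbar) (fun t => acoef c p w1 w2 Ah Ap t / hbar)).
  assert (HU : forall t, 0 <= t -> A t = Ah t /\ B t = Bh t /\ u t = uh t /\ v t = vh t /\ w t = wh t).
  { apply U; clear U.
    - intros t. unfold acoef. field. lra.
    - intros t Ht. specialize (HS2 t Ht). unfold on_S2 in HS2. pose proof (pow2_ge_0 (v t)). lra.
    - auto. - auto. - auto. - auto. - auto. - auto. - auto.
    - unfold uh. apply rc_mult. apply rc_const. apply rc_plus; apply rc_mult; auto.
    - unfold vh. apply rc_mult. apply rc_const. apply rc_minus; apply rc_mult; auto.
    - unfold wh. apply rc_minus; apply rc_plus; apply rc_mult; auto.
    - intros t Ht. exact (DY t Ht).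
    - intros t Ht. destruct (DYh t Ht) as [dC1 [dC2 [dA [dB [d1 [d2 [e1 e2]]]]]]].
      destruct dC1 as [p1 q1], dC2 as [p2 q2].
      pose proof (der_fst _ _ _ d1) as dx1. pose proof (der_snd _ _ _ d1) as dy1.
      pose proof (der_fst _ _ _ d2) as dx2. pose proof (der_snd _ _ _ d2) as dy2.
      simpl in dx1, dy1, dx2, dy2.
      fold x1 in dx1. fold y1 in dy1. fold x2 in dx2. fold y2 in dy2.
      set (aa := acoef c p w1 w2 Ah Ap t).
      fold aa in e1, e2.
      rewrite (surjective_pairing (C1h t)), (surjective_pairing (C2h t)) in e1, e2.
      apply comp_eqs in e1; auto. apply comp_eqs2 in e2; auto.
      destruct e1 as [ep1 eq1]. destruct e2 as [ep2 eq2].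
      fold (x1 t) (y1 t) (x2 t) (y2 t) in ep1, eq1, ep2, eq2.
      rewrite ep1 in dx1. rewrite eq1 in dy1. rewrite ep2 in dx2. rewrite eq2 in dy2.
      split; [exact dA|]. split.
      { eapply der_eq. exact dB. rewrite Hcur. ring. }
      split.
      { unfold uh. eapply der_eq. apply dmult. apply is_derive_const.
        apply dplus; apply dmult; eauto. unfold vh, wh, omega. unfold zero; simpl. ring. }
      split.
      { unfold vh. eapply der_eq. apply dmult. apply is_derive_const.
        apply dminus; apply dmult; eauto. unfold uh, omega, zero. simpl. ring. }
      { unfold wh. eapply der_eq. apply dminus; apply dplus; apply dmult; eauto. unfold uh. simpl. ring. }
    - destruct H0 as [a0 [b0 h0]]. rewrite Hhopf in h0. injection h0. intros. 
      repeat split; auto. }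
  clear U.
  assert (Hhp : forall t, 0 <= t -> hopf (C1h (t + T)) (C2h (t + T)) = hopf (C1h t) (C2h t)).
  { intros t Ht. rewrite !Hhopf.
    destruct (HU t Ht) as [_ [_ [e3 [e4 e5]]]].
    destruct (HU (t+T) ltac:(lra)) as [_ [_ [f3 [f4 f5]]]].
    destruct (Hper t Ht) as [_ [_ [g3 [g4 g5]]]].
    rewrite <- e3, <- e4, <- e5, <- f3, <- f4, <- f5, g3, g4, g5. reflexivity. }
  split.
  - intros t Ht.
    destruct (HU t Ht) as [e1 [e2 [e3 [e4 e5]]]].
    destruct (HU (t+T) ltac:(lra)) as [f1 [f2 [f3 [f4 f5]]]].
    destruct (Hper t Ht) as [g1 [g2 [g3 [g4 g5]]]].
    rewrite !Hcur, !Hinv.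
    rewrite <- e1, <- e2, <- e4, <- e5, <- f1, <- f2, <- f4, <- f5, g1, g2, g4, g5.
    repeat split; reflexivity.
  - intros t Ht. apply fiber.
    + apply HS3; lra.
    + apply HS3; lra.
    + apply Hhp; auto.
Qed.
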